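(* Let $m\ge 2$, $k=2$ (the Bradley--Terry paired comparison model) and $\pi\in\mathbb{R}^m_{>0}$. A Bradley--Terry design $\xi^*=(w^*_{uv})_{u<v}$ is locally $D$-optimal if and only if (i) $w^*_{uv}\ge0$ for all $1\le u<v\le m$, (ii) $\Gamma_{uv}(\xi^* )\le\overline{\Gamma}_{uv}$ for all $u< v$, and (iii) $(\Gamma_{uv}(\xi^* )-\overline{\Gamma}_{uv})\,w^*_{uv}=0$ for all $u<v$, where $\overline{\Gamma}_{uv}=(m-1)/\lambda_{uv}$.
   Context: Bradley--Terry model: alternatives $[m]$ with parameters $\pi_i>0$; choice sets are all pairs $\{u,v\}$; in pair $\{u,v\}$, $u$ is chosen with probability $\pi_u/(\pi_u+\pi_v)$. A design is $\xi=(w_{uv})_{u<v}$ with $w_{uv}\ge0$ and $\sum w_{uv}=1$. Let $\lambda_{uv}=\pi_u\pi_v/(\pi_u+\pi_v)^2$. The information matrix $M(\xi)$ is the $m\times m$ Laplacian with $M_{uv}=-\lambda_{uv}w_{uv}$ for $u\neq v$ and zero row sums; $M^{(m)}(\xi)$ deletes the $m$-th row and column; $\xi^*$ is locally $D$-optimal if it maximizes $\log\det M^{(m)}(\xi)$ over all designs. $\Gamma(\xi)$ is the Farris transform of $\Sigma=M^{(m)}(\xi)^{-1}$: $\Gamma_{uv}=\Sigma_{uu}+\Sigma_{vv}-2\Sigma_{uv}$ for $u,v<m$, $\Gamma_{um}=\Gamma_{mu}=\Sigma_{uu}$, $\Gamma_{mm}=0$. *)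

(* Defs.v *)
From HB Require Import structures.
From mathcomp Require Import all_boot all_order all_algebra.
From mathcomp Require Import all_classical all_reals all_analysis.
Set Implicit Arguments. Unset Strict Implicit. Unset Printing Implicit Defensive.
Import Order.TTheory GRing.Theory Num.Theory.
Local Open Scope ring_scope.

(* Alternatives are 'I_n.+1 (so m = n.+1); the m-th alternative is ord_max.
   A design is a function w : 'I_n.+1 -> 'I_n.+1 -> R of which only the
   entries w u v with u < v are used (w u v = w_{uv}). *)

Section BT.
Variables (R : realType) (n : nat).
Implicit Types (pi : 'I_n.+1 -> R) (w : 'I_n.+1 -> 'I_n.+1 -> R).

Definition wpair w (u v : 'I_n.+1) : R := if (u < v)%N then w u v else w v u.

Definition is_design w : Prop :=
  (forall u v : 'I_n.+1, (u < v)%N -> 0 <= w u v) /\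
  \sum_(u : 'I_n.+1) \sum_(v : 'I_n.+1 | (u < v)%N) w u v = 1.

Definition lambdaBT pi (u v : 'I_n.+1) : R := pi u * pi v / (pi u + pi v) ^+ 2.

Definition infoM pi w : 'M[R]_n.+1 :=
  \matrix_(u, v) if u == v then \sum_(t : 'I_n.+1 | t != u) lambdaBT pi u t * wpair w u t
                 else - (lambdaBT pi u v * wpair w u v).

Definition infoMm pi w : 'M[R]_n := row' ord_max (col' ord_max (infoM pi w)).

Definition logdetM pi w : \bar R :=
  if 0 < \det (infoMm pi w) then (ln (\det (infoMm pi w)))%:E else -oo%E.

Definition locally_D_optimal pi w : Prop :=
  is_design w /\ forall w', is_design w' -> (logdetM pi w' <= logdetM pi w)%E.

(* Farris transform of Sigma = M^(m)^{-1} *)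
Definition GammaBT pi w (u v : 'I_n.+1) : R :=
  let S := invmx (infoMm pi w) in
  match unlift ord_max u, unlift ord_max v with
  | Some i, Some j => S i i + S j j - 2 * S i j
  | Some i, None => S i i
  | None, Some j => S j j
  | None, None => 0
  end.

Definition GammaBar pi (u v : 'I_n.+1) : R := n%:R / lambdaBT pi u v.

End BT.

(* Main.v *)
Require Import Defs.
From HB Require Import structures.
From mathcomp Require Import all_boot all_order all_algebra.
From mathcomp Require Import all_classical all_reals all_analysis.
From mathcomp Require Import ring lra.
Set Implicit Arguments. Unset Strict Implicit. Unset Printing Implicit Defensive.
Import Order.TTheory GRing.Theory Num.Theory.
Local Open Scope ring_scope.

Section Mx.
Variable R : realType.

Definition bil k (A : 'M[R]_k) (x y : 'cV[R]_k) : R := (x^T *m A *m y) 0 0.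
Definition qf k (A : 'M[R]_k) x := bil A x x.
Definition pdef k (A : 'M[R]_k) := forall x : 'cV_k, x != 0 -> 0 < qf A x.
Definition psdef k (A : 'M[R]_k) := forall x : 'cV_k, 0 <= qf A x.
Definition symm k (A : 'M[R]_k) := A^T = A.

Lemma bil_sym k (A : 'M[R]_k) x y : symm A -> bil A x y = bil A y x.
Proof.
move=> sA; rewrite /bil -[in LHS](trmxK (x^T *m A *m y)) mxE.
by rewrite !trmx_mul trmxK sA mulmxA.
Qed.

Lemma bilDl k (A : 'M[R]_k) x1 x2 y : bil A (x1 + x2) y = bil A x1 y + bil A x2 y.
Proof. by rewrite /bil linearD /= !mulmxDl mxE. Qed.
Lemma bilDr k (A : 'M[R]_k) x y1 y2 : bil A x (y1 + y2) = bil A x y1 + bil A x y2.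
Proof. by rewrite /bil !mulmxDr mxE. Qed.
Lemma bilZl k (A : 'M[R]_k) a x y : bil A (a *: x) y = a * bil A x y.
Proof. by rewrite /bil linearZ /= -!scalemxAl mxE. Qed.
Lemma bilZr k (A : 'M[R]_k) a x y : bil A x (a *: y) = a * bil A x y.
Proof. by rewrite /bil -!scalemxAr mxE. Qed.
Lemma bilBl k (A : 'M[R]_k) x1 x2 y : bil A (x1 - x2) y = bil A x1 y - bil A x2 y.
Proof. by rewrite /bil linearB /= !mulmxBl !mxE. Qed.
Lemma bilBr k (A : 'M[R]_k) x y1 y2 : bil A x (y1 - y2) = bil A x y1 - bil A x y2.
Proof. by rewrite /bil !mulmxBr !mxE. Qed.
Lemma bil0l k (A : 'M[R]_k) y : bil A 0 y = 0.
Proof. by rewrite /bil trmx0 !mul0mx mxE. Qed.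
Lemma bil0r k (A : 'M[R]_k) x : bil A x 0 = 0.
Proof. by rewrite /bil mulmx0 mxE. Qed.

Lemma bil_delta k (A : 'M[R]_k) i j : bil A (delta_mx i 0) (delta_mx j 0) = A i j.
Proof. by rewrite /bil trmx_delta -rowE -colE !mxE. Qed.

Lemma bil_conj k (A E : 'M[R]_k) x y : bil (E^T *m A *m E) x y = bil A (E *m x) (E *m y).
Proof. by rewrite /bil trmx_mul !mulmxA. Qed.

Lemma bil_lin k (A B : 'M[R]_k) x y : bil (A + B) x y = bil A x y + bil B x y.
Proof. by rewrite /bil mulmxDr mulmxDl mxE. Qed.

Lemma sqnorm_ge0 k (z : 'cV[R]_k) : (z^T *m z) 0 0 = \sum_i z i 0 ^+ 2.
Proof. by rewrite mxE; apply: eq_bigr => i _; rewrite mxE expr2. Qed.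

Lemma psd_unit_pd k (A : 'M[R]_k) : symm A -> psdef A -> A \in unitmx -> pdef A.
Proof.
move=> sA pA uA x x0; rewrite lt_def pA andbT; apply/eqP => qx0.
have key : forall y, bil A y x = 0.
  move=> y; set p := bil A y x; set q := qf A y.
  have q0 : 0 <= q by apply: pA.
  set t := - p / (q + 1).
  have q1 : q + 1 != 0 by apply/negP => /eqP; lra.
  have hp : p = - t * (q + 1) by rewrite /t mulNr divfK // opprK.
  have := pA (x + t *: y).
  rewrite /qf !(bilDl, bilDr, bilZl, bilZr) (bil_sym x y sA) -/p -/q.
  rewrite [bil A x x]qx0 => h.
  have : t = 0.
    move: h; rewrite hp => h.
    have : t ^+ 2 * (q + 2) <= 0.
      move: h; rewrite !expr2 (_ : bil A y y = q) //.
      have -> : 0 + t * (- t * (q + 1)) + (t * (- t * (q + 1)) + t * (t * q)) = - (t * t * (q + 2)) by ring.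
      by rewrite oppr_ge0.
    by move=> h2; apply/eqP; rewrite -sqrf_eq0; nra.

  by rewrite hp => ->; rewrite oppr0 mul0r.
have := key (A *m x); rewrite /bil -mulmxA sqnorm_ge0 => /psumr_eq0P h.
have Ax0 : A *m x = 0.
  apply/matrixP => i j; rewrite ord1 [RHS]mxE; apply/eqP.
  by rewrite -sqrf_eq0 h // => l _; exact: sqr_ge0.
move/eqP: x0; apply; by rewrite -(mulKmx uA x) Ax0 mulmx0.
Qed.

End Mx.

Lemma wamgm (R : realType) (a s : R) k : 0 <= a -> 0 <= s ->
  a * s ^+ k <= ((a + k%:R * s) / k.+1%:R) ^+ k.+1.
Proof.
move=> a0 s0.
set E := (fun i : 'I_k.+1 => if i == ord0 then a else s).
have := @leif_AGM R 'I_k.+1 predT E.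
rewrite cardT size_enum_ord /= => h.
have {h} := (h (fun i _ => if i == ord0 as b return 0 <= (if b then a else s) then a0 else s0)).1.
have -> : \prod_(i in predT) E i = \prod_i E i by apply: eq_bigl.
have -> : \sum_(i in predT) E i = \sum_i E i by apply: eq_bigl.
rewrite big_ord_recl [X in _ <= (X / _) ^+ _ -> _]big_ord_recl /E /=.
rewrite prodr_const sumr_const card_ord mulr_natl.
done.
Qed.

Lemma qf_blockdiag (R : realType) m1 m2 (P : 'M[R]_m1) (V : 'M[R]_m2) x1 x2 :
  qf (block_mx P 0 0 V) (col_mx x1 x2) = qf P x1 + qf V x2.
Proof.
rewrite /qf /bil tr_col_mx mul_row_block mul_row_col.
by rewrite !mulmx0 !addr0 !add0r !mxE.
Qed.

Lemma pd_tr_ge0 (R : realType) k (A : 'M[R]_k) : pdef A -> 0 <= \tr A.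
Proof.
move=> pA; rewrite /mxtrace sumr_ge0 // => i _; rewrite -bil_delta; apply: ltW; apply: pA.
apply/negP => /eqP h; have := congr1 (fun M : 'M[R]_(k, 1) => M i 0) h.
by rewrite !mxE !eqxx /= => /eqP; rewrite oner_eq0.
Qed.

Section Schur.
Variable R : realType.
Variable k : nat.
Variable A : 'M[R]_(1 + k).
Definition sa := ulsubmx A 0 0.
Definition sb := dlsubmx A.
Definition sS := drsubmx A - sa^-1 *: (sb *m sb^T).
Definition sE : 'M[R]_(1 + k) := block_mx 1%:M (sa^-1 *: sb^T) 0 1%:M.
Definition sD : 'M[R]_(1 + k) := block_mx sa%:M 0 0 sS.

Lemma schur_fact : symm A -> sa != 0 -> A = sE^T *m sD *m sE.
Proof.
move=> sA a0.
rewrite /sE /sD tr_block_mx !mulmx_block.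
rewrite -{1}[A]submxK.
have hu : ulsubmx A = sa%:M by rewrite [LHS]mx11_scalar.
have hur : ursubmx A = sb^T by rewrite /sb trmx_dlsub sA.
rewrite hu hur !trmx1 !trmx0 (_ : (sa^-1 *: sb^T)^T = sa^-1 *: sb); last first.
  by rewrite linearZ /= trmxK.
rewrite !(mul1mx, mulmx1, mul0mx, mulmx0, add0r, addr0).
rewrite mul_scalar_mx mul_mx_scalar !scalerA mulfV // !scale1r.
congr block_mx; rewrite /sS -scalemxAr.
by rewrite addrC subrK.
Qed.

Lemma sE_unit : sE \in unitmx.
Proof. by rewrite unitmxE /sE det_ublock !det1 mulr1 unitr1. Qed.

Lemma schur_det : symm A -> sa != 0 -> \det A = sa * \det sS.
Proof.
move=> sA a0; rewrite {1}(schur_fact sA a0) !det_mulmx det_tr /sE det_ublock !det1.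
by rewrite /sD det_ublock det_scalar1 !mul1r mulr1.
Qed.

Lemma qf_e1 : qf A (col_mx 1%:M 0) = sa.
Proof.
rewrite /qf /bil tr_col_mx -{1}[A]submxK mul_row_block mul_row_col trmx1 trmx0.
by rewrite !mul1mx !mul0mx !mulmx0 !addr0 mulmx1.
Qed.

Lemma pd_sa : pdef A -> 0 < sa.
Proof.
move=> pA; rewrite -qf_e1; apply: pA; rewrite col_mx_eq0 negb_and; apply/orP; left.
apply/negP => /eqP h; have := congr1 (fun M : 'M[R]_1 => M 0 0) h.
by rewrite !mxE /= => /eqP; rewrite oner_eq0.
Qed.

Lemma pd_sD : symm A -> pdef A -> pdef sD.
Proof.
move=> sA pA z z0; have a0 : sa != 0 by rewrite gt_eqF // pd_sa.
have uE := sE_unit.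
have x0 : invmx sE *m z != 0.
  by apply: contraNneq z0 => h; rewrite -(mulKVmx uE z) h mulmx0.
by have := pA _ x0; rewrite /qf {1}(schur_fact sA a0) bil_conj mulKVmx.
Qed.

Lemma symm_sS : symm A -> symm sS.
Proof.
move=> sA; rewrite /symm /sS linearB /= linearZ /= trmx_mul trmxK.
by rewrite trmx_drsub sA.
Qed.

Lemma tr_split : \tr A = sa + \tr (drsubmx A).
Proof. by rewrite -{1}[A]submxK mxtrace_block trace_mx11. Qed.

Lemma tr_sS : \tr sS = \tr (drsubmx A) - sa^-1 * \sum_i (sb i 0) ^+ 2.
Proof. by rewrite /sS linearB /= mxtraceZ mxtrace_mulC trace_mx11 sqnorm_ge0. Qed.

Lemma pd_sS : symm A -> pdef A -> pdef sS.
Proof.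
move=> sA pA y y0.
have := pd_sD sA pA (x := col_mx 0 y).
rewrite /sD qf_blockdiag /qf bil0l add0r; apply.
by rewrite col_mx_eq0 negb_and y0 orbT.
Qed.

End Schur.

Lemma cholesky (R : realType) k (A : 'M[R]_k) : symm A -> pdef A ->
  exists2 L : 'M[R]_k, L \in unitmx & A = L *m L^T.
Proof.
elim: k A => [|k IH] A sA pA.
  exists 1%:M; first by rewrite unitmxE det1 unitr1.
  by apply/matrixP => [[]].
have a0 := @pd_sa R k A pA.
case: (IH (sS A)) => [||L' uL' hS]; [exact: symm_sS | exact: pd_sS |].
pose G : 'M[R]_(1 + k) := block_mx (Num.sqrt (sa A))%:M 0 0 L'.
have hD : sD A = G *m G^T.
  rewrite /G tr_block_mx mulmx_block !trmx0 tr_scalar_mx.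
  rewrite !(mulmx0, mul0mx, addr0, add0r) -scalar_mxM -expr2 sqr_sqrtr ?ltW //.
  by rewrite -hS.
exists ((sE A)^T *m G).
  rewrite unitmx_mul unitmx_tr sE_unit /= unitmxE /G. rewrite (@det_ublock _ 1 k) det_scalar1 unitrM.
  rewrite unitfE gt_eqF ?sqrtr_gt0 //=; by rewrite unitmxE in uL'.
rewrite {1}(schur_fact sA (lt0r_neq0 a0)) hD trmx_mul trmxK !mulmxA.
done.
Qed.

Lemma amgm_det (R : realType) k (A : 'M[R]_k.+1) : symm A -> pdef A ->
  \det A <= (\tr A / k.+1%:R) ^+ k.+1.
Proof.
elim: k A => [|k IH] A sA pA.
  by rewrite det_mx11 trace_mx11 divr1 expr1.
have a0 := @pd_sa R k.+1 A pA.
rewrite (@schur_det _ k.+1 A sA (lt0r_neq0 a0)) (@tr_split _ k.+1 A).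
have hS := IH (sS A) (symm_sS sA) (pd_sS sA pA).
have tS0 : 0 <= \tr (sS A) by apply: pd_tr_ge0; exact: pd_sS.
set s := \tr (sS A) / k.+1%:R.
have s0 : 0 <= s by rewrite /s divr_ge0.
have tSC : \tr (sS A) <= \tr (@drsubmx R 1 k.+1 1 k.+1 A).
  rewrite tr_sS lerBlDr lerDl; apply: mulr_ge0; first by rewrite invr_ge0 ltW.
  by apply: sumr_ge0 => i _; exact: sqr_ge0.
apply: le_trans (_ : sa A * s ^+ k.+1 <= _).
  by apply: ler_wpM2l; [exact: ltW|exact: hS].
apply: le_trans (@wamgm R (sa A) s k.+1 (ltW a0) s0) _.
have -> : k.+1%:R * s = \tr (sS A) by rewrite /s mulrC divfK // pnatr_eq0.
rewrite ler_pXn2r // ?nnegrE.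
- by rewrite ler_pM2r ?invr_gt0 ?ltr0n // lerD2l.
- by rewrite divr_ge0 // addr_ge0 // ltW.
- by rewrite divr_ge0 // addr_ge0 // ?(ltW a0) // (le_trans tS0 tSC).
Qed.

Lemma det_rank1 (R : realType) k (x y : 'cV[R]_k) :
  \det (1%:M + x *m y^T) = 1 + (y^T *m x) 0 0.
Proof.
have e1 : block_mx (1%:M : 'M[R]_1) 0 x 1%:M *m block_mx (1%:M : 'M[R]_1) (-y^T) 0 (1%:M + x *m y^T)
        = block_mx (1%:M + y^T *m x) (-y^T) 0 1%:M *m block_mx (1%:M : 'M[R]_1) 0 x 1%:M.
  rewrite !mulmx_block !(mulmx0, mul0mx, mulmx1, mul1mx, addr0, add0r).
  by congr block_mx; rewrite ?mulmxN ?mulNmx; [rewrite addrK | rewrite addrC addrK].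
have := congr1 determinant e1.
rewrite !det_mulmx !det_lblock !det_ublock.
by rewrite !det1 !mul1r !mulr1 det_mx11 !mxE => ->.
Qed.

Lemma det_rank1M (R : realType) k (M : 'M[R]_k) (x y : 'cV[R]_k) : M \in unitmx ->
  \det (M + x *m y^T) = \det M * (1 + (y^T *m invmx M *m x) 0 0).
Proof.
move=> uM.
have -> : M + x *m y^T = M *m (1%:M + (invmx M *m x) *m y^T).
  by rewrite mulmxDr mulmx1 mulmxA mulmxA mulmxV // mul1mx.
by rewrite det_mulmx det_rank1 mulmxA.
Qed.


Section BTp.
Variables (R : realType) (n : nat) (pi : 'I_n.+1 -> R).
Implicit Types (w : 'I_n.+1 -> 'I_n.+1 -> R).

Definition evec (u : 'I_n.+1) : 'cV[R]_n :=
  if unlift ord_max u is Some i then delta_mx i 0 else 0.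
Definition avec u v := evec u - evec v.
Definition Bm u v : 'M[R]_n := lambdaBT pi u v *: (avec u v *m (avec u v)^T).

Lemma evecE u i : evec u i 0 = (lift ord_max i == u)%:R.
Proof.
rewrite /evec; case: unliftP => [j ->|->]; rewrite !mxE.
  by rewrite (inj_eq lift_inj) andbT.
by rewrite eq_sym (negbTE (neq_lift _ _)).
Qed.

Lemma lambda_sym u v : lambdaBT pi u v = lambdaBT pi v u.
Proof. by rewrite /lambdaBT [pi u * _]mulrC [pi u + _]addrC. Qed.

Lemma Bm_entry u v i j : Bm u v i j = lambdaBT pi u v *
  (((lift ord_max i == u)%:R - (lift ord_max i == v)%:R) *
   ((lift ord_max j == u)%:R - (lift ord_max j == v)%:R)).
Proof. by rewrite !mxE big_ord1 !mxE !evecE. Qed.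

Lemma sum_delta (V : nmodType) (F : 'I_n.+1 -> V) x :
  \sum_u (if x == u then F u else 0) = F x.
Proof.
rewrite (bigD1 x) //= eqxx big1 ?addr0 // => u ux.
by rewrite eq_sym (negbTE ux).
Qed.

Lemma sum_delta_filt (V : nmodType) (P : pred 'I_n.+1) (F : 'I_n.+1 -> V) x :
  \sum_(u | P u) (if x == u then F u else 0) = if P x then F x else 0.
Proof.
rewrite big_mkcond /= -[RHS](sum_delta (fun u => if P u then F u else 0) x).
by apply: eq_bigr => u _; case: (P u); case: (x == u).
Qed.

Lemma sum_deltaR (F : 'I_n.+1 -> R) x :
  \sum_u (if x == u then F u else 0) = F x.
Proof. exact: sum_delta. Qed.

Lemma sum_delta_filtR (P : pred 'I_n.+1) (F : 'I_n.+1 -> R) x :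
  \sum_(u | P u) (if x == u then F u else 0) = if P x then F x else 0.
Proof. exact: sum_delta_filt. Qed.

Lemma natr_if (b : bool) (y : R) : b%:R * y = if b then y else 0.
Proof. by case: b; rewrite ?mul1r ?mul0r. Qed.

Lemma lap_P1 (c : 'I_n.+1 -> 'I_n.+1 -> R) (x y : 'I_n.+1) :
  \sum_(u : 'I_n.+1) \sum_(v : 'I_n.+1 | (u < v)%N) (x == u)%:R * ((y == u)%:R * c u v) =
  (x == y)%:R * \sum_(v : 'I_n.+1 | (x < v)%N) c x v.
Proof.
under eq_bigr do rewrite -big_distrr /= natr_if.
apply: eq_trans (sum_deltaR _ x) _.
by rewrite -big_distrr /= eq_sym.
Qed.

Lemma lap_P2 (c : 'I_n.+1 -> 'I_n.+1 -> R) (x y : 'I_n.+1) :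
  \sum_(u : 'I_n.+1) \sum_(v : 'I_n.+1 | (u < v)%N) (x == u)%:R * ((y == v)%:R * c u v) =
  (x < y)%N%:R * c x y.
Proof.
under eq_bigr do rewrite -big_distrr /= natr_if.
rewrite sum_delta.
under eq_bigr do rewrite natr_if.
by rewrite sum_delta_filtR natr_if.
Qed.

Lemma lap_P4 (c : 'I_n.+1 -> 'I_n.+1 -> R) (x y : 'I_n.+1) :
  \sum_(u : 'I_n.+1) \sum_(v : 'I_n.+1 | (u < v)%N) (x == v)%:R * ((y == v)%:R * c u v) =
  (x == y)%:R * \sum_(u : 'I_n.+1 | (u < x)%N) c u x.
Proof.
rewrite (exchange_big_dep xpredT) //=.
under eq_bigr do rewrite -big_distrr /= natr_if.
apply: eq_trans (sum_deltaR _ x) _.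
by rewrite -big_distrr /= eq_sym.
Qed.

Lemma lap w (x y : 'I_n.+1) : infoM pi w x y =
  \sum_(u : 'I_n.+1) \sum_(v : 'I_n.+1 | (u < v)%N) w u v * (lambdaBT pi u v *
   (((x == u)%:R - (x == v)%:R) * ((y == u)%:R - (y == v)%:R))).
Proof.
pose c := fun u v => w u v * lambdaBT pi u v.
have -> : \sum_(u : 'I_n.+1) \sum_(v : 'I_n.+1 | (u < v)%N) w u v * (lambdaBT pi u v *
   (((x == u)%:R - (x == v)%:R) * ((y == u)%:R - (y == v)%:R))) =
  \sum_(u : 'I_n.+1) \sum_(v : 'I_n.+1 | (u < v)%N) (x == u)%:R * ((y == u)%:R * c u v)
  - \sum_(u : 'I_n.+1) \sum_(v : 'I_n.+1 | (u < v)%N) (x == u)%:R * ((y == v)%:R * c u v)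
  - \sum_(u : 'I_n.+1) \sum_(v : 'I_n.+1 | (u < v)%N) (y == u)%:R * ((x == v)%:R * c u v)
  + \sum_(u : 'I_n.+1) \sum_(v : 'I_n.+1 | (u < v)%N) (x == v)%:R * ((y == v)%:R * c u v).
  rewrite -!sumrB -big_split /=; apply: eq_bigr => u _.
  rewrite -!sumrB -big_split /=; apply: eq_bigr => v _.
  by rewrite /c; ring.
rewrite lap_P1 lap_P2 lap_P2 lap_P4 /infoM mxE.
case: (eqVneq x y) => [<-|nxy].
  rewrite ltnn mul0r subr0 subr0 !mul1r.
  rewrite (bigID (fun t : 'I_n.+1 => (x < t)%N)) /=; congr (_ + _).
    apply: eq_big => t; first by rewrite -val_eqE /=; case: ltngtP.
    by move=> /andP[_ xt]; rewrite /wpair xt /c mulrC.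
  apply: eq_big => t; first by rewrite -val_eqE /=; case: ltngtP.
  move=> /andP[_ xt]; rewrite /wpair (negbTE xt) /c mulrC lambda_sym //.
rewrite (_ : false%:R = 0 :> R) // !mul0r /wpair /c.
case: ltngtP => h.
- by rewrite mul1r mul0r; ring.
- by rewrite mul1r mul0r lambda_sym; ring.
- by move/val_inj: h nxy => ->; rewrite eqxx.
Qed.

Lemma infoMm_sum w : infoMm pi w =
  \sum_(u : 'I_n.+1) \sum_(v : 'I_n.+1 | (u < v)%N) w u v *: Bm u v.
Proof.
apply/matrixP => i j; rewrite /infoMm mxE mxE lap summxE; apply: eq_bigr => u _.
by rewrite summxE; apply: eq_bigr => v _; rewrite mxE Bm_entry.
Qed.

Lemma pi_lambda_gt0 u v : (forall u, 0 < pi u) -> 0 < lambdaBT pi u v.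
Proof.
move=> hpi; rewrite /lambdaBT divr_gt0 ?mulr_gt0 ?exprn_gt0 ?addr_gt0 //.
Qed.

Lemma bil_sum k (I : finType) (P : pred I) (F : I -> 'M[R]_k) x y :
  bil (\sum_(i | P i) F i) x y = \sum_(i | P i) bil (F i) x y.
Proof. by rewrite /bil mulmx_sumr mulmx_suml summxE. Qed.

Lemma bil_scale k a (A : 'M[R]_k) x y : bil (a *: A) x y = a * bil A x y.
Proof. by rewrite /bil -scalemxAr -scalemxAl mxE. Qed.

Lemma qf_Bm u v x : qf (Bm u v) x = lambdaBT pi u v * ((x^T *m avec u v) 0 0) ^+ 2.
Proof.
rewrite /qf bil_scale /bil; congr (_ * _).
rewrite !mulmxA -mulmxA (_ : (avec u v)^T *m x = (x^T *m avec u v)^T); last first.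
  by rewrite trmx_mul trmxK.
by rewrite [in LHS]mxE big_ord1 [_^T 0 0]mxE expr2.
Qed.

Lemma symm_Bm u v : symm (Bm u v).
Proof. by rewrite /symm /Bm linearZ /= trmx_mul trmxK. Qed.

Lemma symm_infoMm w : symm (infoMm pi w).
Proof.
rewrite /symm infoMm_sum linear_sum /=; apply: eq_bigr => u _.
rewrite linear_sum /=; apply: eq_bigr => v _.
by rewrite linearZ /= symm_Bm.
Qed.

Lemma psd_infoMm w : (forall u v : 'I_n.+1, (u < v)%N -> 0 <= w u v) ->
  (forall u, 0 < pi u) -> psdef (infoMm pi w).
Proof.
move=> w0 hpi x; rewrite /qf infoMm_sum bil_sum sumr_ge0 // => u _.
rewrite bil_sum sumr_ge0 // => v uv; rewrite bil_scale mulr_ge0 ?w0 //.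
by rewrite -/(qf _ _) qf_Bm mulr_ge0 ?sqr_ge0 // ltW // pi_lambda_gt0.
Qed.

Lemma tr_Bm (S : 'M[R]_n) u v :
  \tr (S *m Bm u v) = lambdaBT pi u v * bil S (avec u v) (avec u v).
Proof.
rewrite /Bm -scalemxAr mxtraceZ; congr (_ * _).
by rewrite mulmxA mxtrace_mulC trace_mx11 /bil mulmxA.
Qed.

Lemma bil_evec (S : 'M[R]_n) u v : bil S (evec u) (evec v) =
  match unlift ord_max u, unlift ord_max v with
  | Some i, Some j => S i j | _, _ => 0 end.
Proof.
rewrite /evec; case: (unlift ord_max u) => [i|]; case: (unlift ord_max v) => [j|];
  by rewrite ?bil_delta ?bil0l ?bil0r.
Qed.

Lemma Gamma_bil w u v : GammaBT pi w u v =
  bil (invmx (infoMm pi w)) (avec u v) (avec u v).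
Proof.
have sS : symm (invmx (infoMm pi w)) by rewrite /symm trmx_inv symm_infoMm.
rewrite /avec bilBl !bilBr !bil_evec /GammaBT.
case: (unlift ord_max u) => [i|]; case: (unlift ord_max v) => [j|];
  rewrite ?subr0 ?sub0r ?opprK //.
have -> : invmx (infoMm pi w) j i = invmx (infoMm pi w) i j.
  by rewrite -[in LHS]sS mxE.
ring.
Qed.

Lemma sum_pair (V : nmodType) (F : 'I_n.+1 -> 'I_n.+1 -> V) (u0 v0 : 'I_n.+1) :
  (u0 < v0)%N ->
  \sum_(u : 'I_n.+1) \sum_(v : 'I_n.+1 | (u < v)%N)
     (if (u == u0) && (v == v0) then F u v else 0) = F u0 v0.
Proof.
move=> uv0; rewrite (bigD1 u0) //= [X in _ + X]big1 ?addr0; last first.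
  by move=> u uu0; apply: big1 => v _; rewrite (negbTE uu0).
rewrite (bigD1 v0) //= !eqxx /= big1 ?addr0 // => v /andP[_ vv0].
by rewrite (negbTE vv0).
Qed.

Definition wcomb w a b (u0 v0 : 'I_n.+1) : 'I_n.+1 -> 'I_n.+1 -> R :=
  fun u v => a * w u v + b * ((u == u0) && (v == v0))%:R.

Lemma infoMm_comb w a b (u0 v0 : 'I_n.+1) : (u0 < v0)%N ->
  infoMm pi (wcomb w a b u0 v0) = a *: infoMm pi w + b *: Bm u0 v0.
Proof.
move=> uv0; rewrite !infoMm_sum.
rewrite -(sum_pair (fun u v => b *: Bm u v) uv0) scaler_sumr -big_split /=.
apply: eq_bigr => u _; rewrite scaler_sumr -big_split /=; apply: eq_bigr => v _.
rewrite /wcomb scalerDl -scalerA; congr (_ + _).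
by case: ((u == u0) && (v == v0)); rewrite ?mulr1 ?mulr0 ?scale0r.
Qed.

Lemma sum_comb w a b (u0 v0 : 'I_n.+1) : (u0 < v0)%N ->
  \sum_(u : 'I_n.+1) \sum_(v : 'I_n.+1 | (u < v)%N) wcomb w a b u0 v0 u v =
  a * \sum_(u : 'I_n.+1) \sum_(v : 'I_n.+1 | (u < v)%N) w u v + b.
Proof.
move=> uv0; rewrite -{2}[b](sum_pair (fun u v => b) uv0) mulr_sumr -big_split /=.
apply: eq_bigr => u _; rewrite mulr_sumr -big_split /=; apply: eq_bigr => v _.
by rewrite /wcomb; case: ((u == u0) && (v == v0)); rewrite ?mulr1 ?mulr0.
Qed.

Definition wstar : 'I_n.+1 -> 'I_n.+1 -> R :=
  fun u v => if v == ord_max then n%:R^-1 else 0.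

Lemma wpair_star (x t : 'I_n.+1) : x != ord_max ->
  wpair wstar x t = if t == ord_max then n%:R^-1 else 0.
Proof.
move=> xm; rewrite /wpair /wstar (negbTE xm); case: ifP => // xt.
case: eqP => // tm; move: xt; rewrite tm.
have : (x < n)%N.
  by have := ltn_ord x; rewrite ltnS leq_eqVlt => /orP[/eqP h|//]; move: xm; rewrite -val_eqE /= h eqxx.
by rewrite /= => ->.
Qed.

Lemma lift_max_neq (j : 'I_n) : (lift ord_max j == ord_max :> 'I_n.+1) = false.
Proof. by apply/negbTE; rewrite eq_sym; apply: neq_lift. Qed.

Lemma infoMm_star : infoMm pi wstar =
  diag_mx (\row_i (lambdaBT pi (lift ord_max i) ord_max * n%:R^-1)).
Proof.
apply/matrixP => i j; rewrite /infoMm mxE mxE /infoM mxE [RHS]mxE mxE.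
rewrite (inj_eq lift_inj).
case: eqP => [->|ij]; last first.
  rewrite wpair_star ?lift_max_neq //.
  by rewrite mulr0 oppr0 mulr0n.
rewrite mulr1n (bigD1 ord_max) /=; last by rewrite eq_sym lift_max_neq.
rewrite wpair_star ?lift_max_neq // eqxx big1 ?addr0 // => t /andP[_ tm].
by rewrite wpair_star ?lift_max_neq // (negbTE tm) mulr0.
Qed.

Lemma design_star : (0 < n)%N -> is_design wstar.
Proof.
move=> n0; split.
  by move=> u v _; rewrite /wstar; case: ifP => // _; rewrite invr_ge0 ler0n.
rewrite (eq_bigr (fun u : 'I_n.+1 => if (u < n)%N then n%:R^-1 else 0)); last first.
  move=> u _; rewrite /wstar; under eq_bigr do rewrite eq_sym.
  exact: (sum_delta_filtR (fun v : 'I_n.+1 => (u < v)%N) (fun _ => n%:R^-1) ord_max).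
rewrite big_ord_recr /= ltnn addr0.
rewrite (eq_bigr (fun _ => n%:R^-1)) => [|i _]; last by rewrite ltn_ord.
by rewrite sumr_const card_ord -[_ *+ n]mulr_natr mulVf // pnatr_eq0 -lt0n.
Qed.

Lemma det_star : (forall u, 0 < pi u) -> (0 < n)%N -> 0 < \det (infoMm pi wstar).
Proof.
move=> hpi n0; rewrite infoMm_star det_diag; apply: prodr_gt0 => i _.
by rewrite mxE mulr_gt0 ?pi_lambda_gt0 // invr_gt0 ltr0n.
Qed.

End BTp.
Arguments evec {R n}.
Arguments avec {R n}.
Arguments Bm {R n}.
Arguments wstar {R n}.

Lemma bern (R : realType) (t : R) k : 0 <= t -> t <= 1 -> 1 - k%:R * t <= (1 - t) ^+ k.
Proof.
move=> t0 t1; elim: k => [|k IH]; first by rewrite mul0r subr0 expr0.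
have K0 : 0 <= k%:R :> R by rewrite ler0n.
rewrite exprS -addn1 natrD.
have h1 : 0 <= 1 - t by lra.
have : (1 - t) * (1 - k%:R * t) <= (1 - t) * (1 - t) ^+ k by rewrite ler_wpM2l.
set p := (1 - t) ^+ k; set K := k%:R; nra.
Qed.

Lemma gain (R : realType) (g : R) k : k.+1%:R < g ->
  exists t, [/\ 0 < t, t < 1 & 1 < (1 - t) ^+ k * (1 - t + t * g)].
Proof.
set N := k.+1%:R => gN.
have N1 : 1 <= N by rewrite /N ler1n.
have K0 : 0 <= k%:R :> R by rewrite ler0n.
have KN : k%:R + 1 = N by rewrite /N -addn1 natrD.
have g1 : 0 < g - 1 by lra.
pose t := (g - N) / (2 * N * (g - 1)).
have D0 : 0 < 2 * N * (g - 1) by rewrite !mulr_gt0 //; lra.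
have ht : t * (2 * N * (g - 1)) = g - N by rewrite /t divfK // gt_eqF.
have t0 : 0 < t by rewrite /t divr_gt0 //; lra.
have t1 : t < 1.
  rewrite /t ltr_pdivrMr // mul1r; nra.
exists t; split => //.
have b := bern k (ltW t0) (ltW t1).
have q0 : 0 < 1 - t + t * g by nra.
have : (1 - k%:R * t) * (1 - t + t * g) <= (1 - t) ^+ k * (1 - t + t * g).
  by rewrite ler_pM2r.
suff : 1 < (1 - k%:R * t) * (1 - t + t * g) by lra.
have e : k%:R * t * (g - 1) <= (g - N) / 2.
  have : k%:R * t * (g - 1) <= N * t * (g - 1) by nra.
  have : N * t * (g - 1) = (g - N) / 2 by rewrite -ht; field.
  lra.
nra.
Qed.

Lemma trace_identity (R : realType) n (pi : 'I_n.+1 -> R) (S : 'M[R]_n) w :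
  \tr (S *m infoMm pi w) = \sum_(u : 'I_n.+1) \sum_(v : 'I_n.+1 | (u < v)%N)
     w u v * (lambdaBT pi u v * bil S (avec u v) (avec u v)).
Proof.
rewrite infoMm_sum mulmx_sumr raddf_sum; apply: eq_bigr => u _.
rewrite mulmx_sumr raddf_sum; apply: eq_bigr => v _.
by rewrite /= -scalemxAr mxtraceZ tr_Bm.
Qed.

Unset Implicit Arguments.
Set Strict Implicit.

Theorem corollary4p2 (R : realType) (n : nat) (hn : (1 <= n)%N)
  (pi : 'I_n.+1 -> R) (hpi : forall u, 0 < pi u)
  (w : 'I_n.+1 -> 'I_n.+1 -> R)
  (hsum : \sum_(u : 'I_n.+1) \sum_(v : 'I_n.+1 | (u < v)%N) w u v = 1) :
  locally_D_optimal pi w <->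
  [/\ (forall u v : 'I_n.+1, (u < v)%N -> 0 <= w u v),
      infoMm pi w \in unitmx,
      (forall u v : 'I_n.+1, (u < v)%N -> GammaBT pi w u v <= GammaBar pi u v) &
      (forall u v : 'I_n.+1, (u < v)%N ->
          (GammaBT pi w u v - GammaBar pi u v) * w u v = 0)].
Proof.
case: n hn pi hpi w hsum => [//|n] _ pi hpi w hsum.
set M := infoMm pi w.
set S := invmx M.
pose g u v := lambdaBT pi u v * bil S (avec u v) (avec u v).
have hGle : forall u v : 'I_n.+2, (GammaBT pi w u v <= GammaBar pi u v) = (g u v <= n.+1%:R).
  by move=> u v; rewrite Gamma_bil /GammaBar ler_pdivlMr ?pi_lambda_gt0 // mulrC.
have htr : forall w', \tr (S *m infoMm pi w') =
    \sum_(u : 'I_n.+2) \sum_(v : 'I_n.+2 | (u < v)%N) w' u v * g u v.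
  by move=> w'; rewrite trace_identity.
split.
- move=> [[w0 _] hopt].
  have dM : 0 < \det M.
    have := hopt _ (@design_star R n.+1 erefl).
    rewrite /logdetM (@det_star R n.+1 pi hpi erefl).
    by case: ifP => // _; rewrite leeNy_eq.
  have uM : M \in unitmx by rewrite unitmxE unitfE gt_eqF.
  have hG : forall u v : 'I_n.+2, (u < v)%N -> g u v <= n.+1%:R.
    move=> u0 v0 uv0; rewrite leNgt; apply/negP => hg.
    have [t [t0 t1 ht]] := gain hg.
    pose wt := wcomb w (1 - t) t u0 v0.
    have dwt : is_design wt.
      split; last by rewrite sum_comb // hsum mulr1 subrK.
      move=> u v uv; rewrite /wcomb; apply: addr_ge0; apply: mulr_ge0.
      - lra.
      - exact: w0.
      - lra.
      - exact: ler0n.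
    have := hopt _ dwt.
    have t1' : 1 - t != 0 by apply/negP => /eqP; lra.
    pose a : 'cV[R]_n.+1 := avec u0 v0; pose l := lambdaBT pi u0 v0.
    have e : infoMm pi wt = (1 - t) *: (M + ((t / (1 - t) * l) *: a) *m a^T).
      rewrite infoMm_comb // scalerDr -scalemxAl scalerA /Bm scalerA -/a -/l.
      by congr (_ + _); congr (_ *: _); field.
    have edet : \det (infoMm pi wt) = \det M * ((1 - t) ^+ n * (1 - t + t * g u0 v0)).
      rewrite e detZ det_rank1M // -scalemxAr mxE -/(bil S a a) /g -/a -/l -/S.
      by rewrite exprS; field.
    have hbig : \det M < \det (infoMm pi wt) by rewrite edet ltr_pMr.
    rewrite /logdetM edet -edet (lt_trans dM hbig) dM lee_fin ler_ln ?posrE //.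
      by rewrite leNgt hbig.
    exact: lt_trans dM hbig.
  split => //.
  + by move=> u v uv; rewrite hGle hG.
  + move=> u0 v0 uv0.
    have hN : \sum_(u : 'I_n.+2) \sum_(v : 'I_n.+2 | (u < v)%N) w u v * (n.+1%:R - g u v) = 0.
      have -> : \sum_(u : 'I_n.+2) \sum_(v : 'I_n.+2 | (u < v)%N) w u v * (n.+1%:R - g u v)
        = n.+1%:R * \sum_(u : 'I_n.+2) \sum_(v : 'I_n.+2 | (u < v)%N) w u v
          - \sum_(u : 'I_n.+2) \sum_(v : 'I_n.+2 | (u < v)%N) w u v * g u v.
        rewrite mulr_sumr -sumrB; apply: eq_bigr => u _.
        by rewrite mulr_sumr -sumrB; apply: eq_bigr => v _; ring.
      by rewrite hsum mulr1 -htr mulVmx // mxtrace1 subrr.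
    have h1 : forall u : 'I_n.+2, true -> 0 <= \sum_(v : 'I_n.+2 | (u < v)%N) w u v * (n.+1%:R - g u v).
      move=> u _; apply: sumr_ge0 => v uv; rewrite mulr_ge0 ?w0 // subr_ge0; exact: hG.
    have h2 := @psumr_eq0P _ _ _ _ h1 hN u0 isT.
    have h3 : forall v : 'I_n.+2, (u0 < v)%N -> 0 <= w u0 v * (n.+1%:R - g u0 v).
      move=> v uv; rewrite mulr_ge0 ?w0 // subr_ge0; exact: hG.
    have hz := @psumr_eq0P _ _ _ _ h3 h2 v0 uv0.
    rewrite Gamma_bil /GammaBar -/M -/S.
    have l0 : lambdaBT pi u0 v0 != 0 by rewrite gt_eqF ?pi_lambda_gt0.
    move: hz; rewrite /g => hz.
    have -> : (bil S (avec u0 v0) (avec u0 v0) - n.+1%:R / lambdaBT pi u0 v0) * w u0 v0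
      = - (w u0 v0 * (n.+1%:R - lambdaBT pi u0 v0 * bil S (avec u0 v0) (avec u0 v0))) / lambdaBT pi u0 v0.
      by field.
    by rewrite hz oppr0 mul0r.
- move=> [w0 uM hG _]; split; first by split.
  move=> w' [w'0 w'sum].
  have sM : symm M := symm_infoMm pi w.
  have pM : pdef M := psd_unit_pd sM (psd_infoMm w0 hpi) uM.
  case: (cholesky sM pM) => L uL hL.
  have dL : \det L != 0 by rewrite -unitfE -unitmxE.
  have dM : 0 < \det M.
    by rewrite hL det_mulmx det_tr lt_def mulf_neq0 // -expr2 sqr_ge0.
  rewrite /logdetM dM; case: ifP => [dM'|]; last by rewrite leNye.
  rewrite lee_fin ler_ln ?posrE //.
  set M' := infoMm pi w'.
  have uM' : M' \in unitmx by rewrite unitmxE unitfE gt_eqF.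
  have sM' : symm M' := symm_infoMm pi w'.
  have pM' : pdef M' := psd_unit_pd sM' (psd_infoMm w'0 hpi) uM'.
  set Li := invmx L.
  set A := Li *m M' *m Li^T.
  have sA : symm A by rewrite /symm /A !trmx_mul trmxK sM' mulmxA.
  have uE : Li^T \in unitmx by rewrite unitmx_tr unitmx_inv.
  have pA : pdef A.
    move=> x x0; rewrite /qf /A -{1}[Li]trmxK bil_conj; apply: pM'.
    by apply: contraNneq x0 => h; rewrite -(mulKmx uE x) h mulmx0.
  have hSX : S = Li^T *m Li.
    have hMX : M *m (Li^T *m Li) = 1%:M.
      by rewrite hL -mulmxA [L^T *m _]mulmxA -trmx_mul mulVmx // trmx1 mul1mx mulmxV.
    by rewrite -[Li^T *m Li](mulKmx uM) hMX mulmx1.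
  have trA : \tr A = \tr (S *m M').
    by rewrite /A -mulmxA mxtrace_mulC -mulmxA hSX mxtrace_mulC.
  have detA : \det A = \det M' / \det M.
    by rewrite /A !det_mulmx det_tr /Li det_inv hL det_mulmx det_tr; field.
  have trle : \tr A <= n.+1%:R.
    rewrite trA htr.
    apply: (@le_trans _ _ (\sum_(u : 'I_n.+2) \sum_(v : 'I_n.+2 | (u < v)%N) w' u v * n.+1%:R)).
      apply: ler_sum => u _; apply: ler_sum => v uv.
      by rewrite ler_wpM2l ?w'0 // -hGle hG.
    under eq_bigr do rewrite -mulr_suml.
    by rewrite -mulr_suml w'sum mul1r.
  have := amgm_det sA pA.
  have h1 : (\tr A / n.+1%:R) ^+ n.+1 <= 1.
    by rewrite exprn_ile1 // ?divr_ge0 ?pd_tr_ge0 // ler_pdivrMr ?ltr0n // mul1r.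
  move=> h2; have := le_trans h2 h1.
  by rewrite detA ler_pdivrMr // mul1r.
Qed.
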